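(* Let $(\hat A,\hat B)$ satisfy $\max\{\|\hat A-A_\star\|,\|\hat B-B_\star\|\}\le\varepsilon_\mathrm{m}$ and let $F\in\mathbb{S}^n_+$ satisfy $\|F-P_\star\|\le\varepsilon$. Assume $m\le n$, $R\succeq I$, $Q\succeq I$, $(A_\star,B_\star)$ stabilizable, $\|A_\star\|,\|B_\star\|,\|P_\star\|\le\Upsilon_\star$ with $\Upsilon_\star\ge\max\{1,\varepsilon_\mathrm{m}\}$, and $\Upsilon_\star\ge\varepsilon$. Then $K=\mathcal{K}_{\hat A,\hat B}(F)$ satisfies $$\|K-K_\star\|\le\frac{\Upsilon_\star^2(\sqrt{\|P_\star\|}+1)(3\varepsilon_\mathrm{m}+4\varepsilon)}{\underline{\sigma}(R)}.$$
   Context: $A_\star\in\mathbb{R}^{n\times n}$, $B_\star\in\mathbb{R}^{n\times m}$; weights $Q\in\mathbb{S}^n_+$, $R\in\mathbb{S}^m_{++}$; $\|\cdot\|$ spectral norm; $\underline{\sigma}$ smallest singular value. $S_B=BR^{-1}B^\top$; Riccati map $\mathcal{R}_{A,B}(P)=A^\top P(I+S_BP)^{-1}A+Q$. $\mathcal{K}_{A,B}(F)=(R+B^\top FB)^{-1}B^\top FA$. $P_\star$ is the unique positive definite solution of $P_\star=\mathcal{R}_{A_\star,B_\star}(P_\star)$, and $K_\star=\mathcal{K}_{A_\star,B_\star}(P_\star)$. *)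

(* Defs.v *)
From HB Require Import structures.
From mathcomp Require Import all_boot all_order all_algebra.
From mathcomp Require Import all_classical all_reals.
From mathcomp Require Import complex.
Set Implicit Arguments. Unset Strict Implicit. Unset Printing Implicit Defensive.
Import Order.TTheory GRing.Theory Num.Theory.
Local Open Scope ring_scope.
Local Open Scope classical_set_scope.

Section LQR.
Variable R : realType.

Definition vnorm (q : nat) (x : 'cV[R]_q) : R := Num.sqrt (\sum_i (x i 0) ^+ 2).

Definition usphere (q : nat) : set 'cV[R]_q := [set x | vnorm x = 1].

Definition spnorm (p q : nat) (A : 'M[R]_(p, q)) : R :=
  sup [set vnorm (A *m x) | x in @usphere q].

Definition sigma_min (q : nat) (A : 'M[R]_q) : R :=
  inf [set vnorm (A *m x) | x in @usphere q].

Definition symmetric (q : nat) (A : 'M[R]_q) : Prop := A^T = A.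

Definition psd (q : nat) (A : 'M[R]_q) : Prop :=
  symmetric A /\ forall x : 'cV[R]_q, 0 <= (x^T *m A *m x) 0 0.

Definition pd (q : nat) (A : 'M[R]_q) : Prop :=
  symmetric A /\ forall x : 'cV[R]_q, x != 0 -> 0 < (x^T *m A *m x) 0 0.

Definition loewner_ge (q : nat) (A B : 'M[R]_q) : Prop := psd (A - B).

Definition schur_stable (q : nat) (M : 'M[R]_q) : Prop :=
  forall z : R[i], root (map_poly (real_complex R) (char_poly M)) z -> `|z| < 1.

Definition stabilizable (n m : nat) (A : 'M[R]_n) (B : 'M[R]_(n, m)) : Prop :=
  exists K : 'M[R]_(m, n), schur_stable (A - B *m K).

Definition S_B (n m : nat) (B : 'M[R]_(n, m)) (Rw : 'M[R]_m) : 'M[R]_n :=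
  B *m invmx Rw *m B^T.

Definition riccati (n m : nat) (Q : 'M[R]_n) (Rw : 'M[R]_m)
    (A : 'M[R]_n) (B : 'M[R]_(n, m)) (P : 'M[R]_n) : 'M[R]_n :=
  A^T *m P *m invmx (1%:M + S_B B Rw *m P) *m A + Q.

Definition gainK (n m : nat) (Rw : 'M[R]_m)
    (A : 'M[R]_n) (B : 'M[R]_(n, m)) (F : 'M[R]_n) : 'M[R]_(m, n) :=
  invmx (Rw + B^T *m F *m B) *m B^T *m F *m A.

End LQR.

(* Main.v *)
Require Import Defs.
From HB Require Import structures.
From mathcomp Require Import all_boot all_order all_algebra.
From mathcomp Require Import all_classical all_reals.
From mathcomp Require Import complex.
From mathcomp Require Import ring lra.
Set Implicit Arguments. Unset Strict Implicit. Unset Printing Implicit Defensive.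
Import Order.TTheory GRing.Theory Num.Theory.
Local Open Scope ring_scope.
Local Open Scope classical_set_scope.

Section Aux.
Variable R : realType.

Definition qf (k : nat) (P : 'M[R]_k) (u v : 'cV[R]_k) : R := (u^T *m P *m v) 0 0.
Definition dot (k : nat) (u v : 'cV[R]_k) : R := (u^T *m v) 0 0.
Lemma dotE k (u v : 'cV[R]_k) : dot u v = \sum_i u i 0 * v i 0.
Proof. by rewrite /dot mxE; apply: eq_bigr => i _; rewrite mxE. Qed.

Lemma dotC k (u v : 'cV[R]_k) : dot u v = dot v u.
Proof. by rewrite !dotE; apply: eq_bigr => i _; rewrite mulrC. Qed.

Lemma dot_ge0 k (u : 'cV[R]_k) : 0 <= dot u u.
Proof. by rewrite dotE; apply: sumr_ge0 => i _; rewrite -expr2 sqr_ge0. Qed.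

Lemma vnorm_sq k (u : 'cV[R]_k) : vnorm u ^+ 2 = dot u u.
Proof.
rewrite /vnorm sqr_sqrtr; last by apply: sumr_ge0 => i _; rewrite sqr_ge0.
by rewrite dotE; apply: eq_bigr => i _; rewrite expr2.
Qed.

Lemma vnorm_ge0 k (u : 'cV[R]_k) : 0 <= vnorm u.
Proof. exact: sqrtr_ge0. Qed.

Lemma qfE k (P : 'M[R]_k) u v : qf P u v = dot u (P *m v).
Proof. by rewrite /qf /dot mulmxA. Qed.

Lemma dotDl k (u w v : 'cV[R]_k) : dot (u + w) v = dot u v + dot w v.
Proof. by rewrite /dot linearD mulmxDl mxE. Qed.
Lemma dotZl k a (u v : 'cV[R]_k) : dot (a *: u) v = a * dot u v.
Proof. by rewrite /dot linearZ -scalemxAl mxE. Qed.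
Lemma dotDr k (u w v : 'cV[R]_k) : dot v (u + w) = dot v u + dot v w.
Proof. by rewrite dotC dotDl !(dotC v). Qed.
Lemma dotZr k a (u v : 'cV[R]_k) : dot v (a *: u) = a * dot v u.
Proof. by rewrite dotC dotZl dotC. Qed.
Lemma dotNl k (u v : 'cV[R]_k) : dot (- u) v = - dot u v.
Proof. by rewrite -scaleN1r dotZl mulN1r. Qed.
Lemma dotNr k (u v : 'cV[R]_k) : dot v (- u) = - dot v u.
Proof. by rewrite dotC dotNl dotC. Qed.
Lemma dotBl k (u w v : 'cV[R]_k) : dot (u - w) v = dot u v - dot w v.
Proof. by rewrite dotDl dotNl. Qed.
Lemma dotBr k (u w v : 'cV[R]_k) : dot v (u - w) = dot v u - dot v w.
Proof. by rewrite dotDr dotNr. Qed.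
Lemma dot_tr k l (A : 'M[R]_(k,l)) u v : dot u (A *m v) = dot (A^T *m u) v.
Proof.
rewrite /dot trmx_mul trmxK mulmxA //.
Qed.

Lemma qf_sym k (P : 'M[R]_k) u v : P^T = P -> qf P u v = qf P v u.
Proof. by move=> hP; rewrite !qfE dot_tr hP dotC. Qed.

Lemma qf_CS k (P : 'M[R]_k) u v : P^T = P -> (forall x, 0 <= qf P x x) ->
  qf P u v ^+ 2 <= qf P u u * qf P v v.
Proof.
move=> hs hp.
have E : forall a b, qf P (a *: u + b *: v) (a *: u + b *: v) =
   a ^+ 2 * qf P u u + 2 * a * b * qf P u v + b ^+ 2 * qf P v v.
  move=> a b; rewrite !qfE !mulmxDr !dotDl !dotDr -!scalemxAr !dotZl !dotZr.
  rewrite -!qfE (qf_sym u v hs); ring.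
set a := qf P u u; set b := qf P u v; set c := qf P v v.
have h1 := hp (c *: u + (- b) *: v); rewrite E -/a -/b -/c in h1.
have h2 := hp (b *: u + (- a) *: v); rewrite E -/a -/b -/c in h2.
have h3 := hp (1 *: u + (- b) *: v); rewrite E -/a -/b -/c in h3.
have ha : 0 <= a by exact: hp.
have hc : 0 <= c by exact: hp.
have [c0|cpos] := eqVneq c 0.
  have [a0|apos] := eqVneq a 0.
    rewrite c0 a0 mulr0; move: h3; rewrite a0 c0; nra.
  have : 0 < a by rewrite lt_def apos ha.
  move: h2; rewrite c0 mulr0; nra.
have : 0 < c by rewrite lt_def cpos hc.
nra.
Qed.

Lemma dot_CS k (u v : 'cV[R]_k) : `|dot u v| <= vnorm u * vnorm v.
Proof.
have h : dot u v ^+ 2 <= dot u u * dot v v.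
  have := @qf_CS k 1%:M u v (trmx1 _ _).
  rewrite !qfE !mul1mx; apply => x; rewrite qfE mul1mx; exact: dot_ge0.
rewrite -(ger0_norm (mulr_ge0 (vnorm_ge0 u) (vnorm_ge0 v))).
rewrite -ler_sqr ?nnegrE // ger0_norm ?mulr_ge0 ?vnorm_ge0 // exprMn !vnorm_sq real_normK ?num_real // mulr_ge0 ?vnorm_ge0.
Qed.
Lemma le_sq (a b : R) : 0 <= a -> 0 <= b -> a ^+ 2 <= b ^+ 2 -> a <= b.
Proof. by move=> ha hb; rewrite ler_sqr ?nnegrE. Qed.

Lemma eq_sq (a b : R) : 0 <= a -> 0 <= b -> a ^+ 2 = b ^+ 2 -> a = b.
Proof.
move=> ha hb h; apply/le_anti.
by rewrite -(ler_sqr (x:=a)) ?nnegrE // -(ler_sqr (x:=b)) ?nnegrE // h lexx.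
Qed.

Lemma vnorm0 k : vnorm (0 : 'cV[R]_k) = 0.
Proof. by apply: eq_sq; rewrite ?vnorm_ge0 // vnorm_sq dotE expr0n /= big1 // => i _; rewrite mxE mul0r. Qed.

Lemma vnorm_eq0 k (u : 'cV[R]_k) : vnorm u = 0 -> u = 0.
Proof.
move=> h; have : dot u u = 0 by rewrite -vnorm_sq h expr0n.
rewrite dotE => /eqP; rewrite psumr_eq0 => [/allP hall|i _]; last by rewrite -expr2 sqr_ge0.
apply/matrixP => i j; rewrite (ord1 j) mxE.
have := hall i (mem_index_enum i); rewrite implyTb mulf_eq0 orbb => /eqP //.
Qed.

Lemma vnormZ k a (u : 'cV[R]_k) : vnorm (a *: u) = `|a| * vnorm u.
Proof.
apply: eq_sq; rewrite ?mulr_ge0 ?vnorm_ge0 //.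
have e : `|a| ^+ 2 = a ^+ 2 by rewrite real_normK // num_real.
rewrite exprMn e !vnorm_sq dotZl dotZr mulrA expr2 //.
Qed.

Lemma vnormN k (u : 'cV[R]_k) : vnorm (- u) = vnorm u.
Proof. by rewrite -scaleN1r vnormZ normrN1 mul1r. Qed.

Lemma dot_le k (u v : 'cV[R]_k) : dot u v <= vnorm u * vnorm v.
Proof. exact: le_trans (ler_norm _) (dot_CS u v). Qed.

Lemma vnormD k (u v : 'cV[R]_k) : vnorm (u + v) <= vnorm u + vnorm v.
Proof.
apply: le_sq; rewrite ?addr_ge0 ?vnorm_ge0 //.
rewrite vnorm_sq dotDl !dotDr -!vnorm_sq (dotC v u).
have h := dot_le u v.
nra.
Qed.

Lemma vnormB k (u v : 'cV[R]_k) : vnorm (u - v) <= vnorm u + vnorm v.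
Proof. by rewrite -(vnormN v); apply: vnormD. Qed.


Definition frob k l (A : 'M[R]_(k,l)) : R := \sum_i dot (row i A)^T (row i A)^T.

Lemma frob_bound k l (A : 'M[R]_(k,l)) x :
  vnorm (A *m x) <= Num.sqrt (frob A) * vnorm x.
Proof.
have hf : 0 <= frob A by apply: sumr_ge0 => i _; exact: dot_ge0.
apply: le_sq; rewrite ?mulr_ge0 ?vnorm_ge0 ?sqrtr_ge0 //.
rewrite exprMn (sqr_sqrtr hf) !vnorm_sq dotE /frob mulr_suml.
apply: ler_sum => i _; rewrite -expr2.
have -> : (A *m x) i 0 = dot (row i A)^T x.
  by rewrite mxE dotE; apply: eq_bigr => j _; rewrite !mxE.
have := dot_CS (row i A)^T x; rewrite -!vnorm_sq => h.
rewrite -exprMn; apply: le_trans (_ : `|dot (row i A)^T x| ^+ 2 <= _).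
  by rewrite real_normK // num_real.
by rewrite ler_sqr ?nnegrE ?mulr_ge0 ?vnorm_ge0.
Qed.

Lemma spnorm_has_ub k l (A : 'M[R]_(k,l)) :
  has_ubound [set vnorm (A *m x) | x in @usphere R l].
Proof.
exists (Num.sqrt (frob A)) => e [x hx <-].
by have := frob_bound A x; rewrite hx mulr1.
Qed.

Lemma spnorm_ge0 k l (A : 'M[R]_(k,l)) : 0 <= spnorm A.
Proof.
rewrite /spnorm; set S := [set vnorm (A *m x) | x in @usphere R l].
have [/set0P [e He]| /negPn/eqP hS0] := boolP (S != set0).
  apply: le_trans (ub_le_sup (spnorm_has_ub A) He).
  by case: He => x _ <-; exact: vnorm_ge0.
by rewrite hS0 sup0.
Qed.

Lemma vnorm_pos k (x : 'cV[R]_k) : x != 0 -> 0 < vnorm x.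
Proof.
move=> hx; rewrite lt_def vnorm_ge0 andbT; apply/eqP => /vnorm_eq0 h.
by rewrite h eqxx in hx.
Qed.

Lemma spnorm_ub k l (A : 'M[R]_(k,l)) x : vnorm (A *m x) <= spnorm A * vnorm x.
Proof.
have [->|hx] := eqVneq x 0.
  by rewrite mulmx0 !vnorm0 mulr0.
have hp := vnorm_pos hx.
set y := (vnorm x)^-1 *: x.
have hv : 0 <= (vnorm x)^-1 by rewrite invr_ge0 ltW.
have hy : vnorm y = 1 by rewrite vnormZ (ger0_norm hv) mulVf // gt_eqF.
have h := ub_le_sup (spnorm_has_ub A) (ex_intro2 _ _ y hy erefl).
move: h; rewrite -scalemxAr vnormZ (ger0_norm hv) -/(spnorm A) => h.
have := ler_wpM2l (ltW hp) h.
by rewrite mulrA mulfV ?gt_eqF // mul1r mulrC.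
Qed.

Lemma spnorm_le k l (A : 'M[R]_(k,l)) c : 0 <= c ->
  (forall x, vnorm (A *m x) <= c * vnorm x) -> spnorm A <= c.
Proof.
move=> hc h; rewrite /spnorm; set S := [set vnorm (A *m x) | x in @usphere R l].
have [/set0P hS| /negPn/eqP hS0] := boolP (S != set0).
  apply: ge_sup => // e [x hx <-]; by have := h x; rewrite hx mulr1.
by rewrite hS0 sup0.
Qed.

Lemma spnorm_bilin k l (A : 'M[R]_(k,l)) c : 0 <= c ->
  (forall y x, dot y (A *m x) <= c * vnorm y * vnorm x) -> spnorm A <= c.
Proof.
move=> hc h; apply: spnorm_le => // x.
have := h (A *m x) x; rewrite -vnorm_sq.
have [->|hz] := eqVneq (vnorm (A *m x)) 0; first by rewrite mulr_ge0 ?vnorm_ge0.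
have hp : 0 < vnorm (A *m x) by rewrite lt_def hz vnorm_ge0.
by rewrite expr2 (mulrC c) -mulrA ler_pM2l.
Qed.
Lemma spnorm_mul k l o (A : 'M[R]_(k,l)) (B : 'M[R]_(l,o)) :
  spnorm (A *m B) <= spnorm A * spnorm B.
Proof.
apply: spnorm_le; first by rewrite mulr_ge0 ?spnorm_ge0.
move=> x; rewrite -mulmxA; apply: le_trans (spnorm_ub _ _) _.
by rewrite -mulrA ler_wpM2l ?spnorm_ge0 // spnorm_ub.
Qed.

Lemma spnormD k l (A B : 'M[R]_(k,l)) : spnorm (A + B) <= spnorm A + spnorm B.
Proof.
apply: spnorm_le; first by rewrite addr_ge0 ?spnorm_ge0.
move=> x; rewrite mulmxDl mulrDl; apply: le_trans (vnormD _ _) _.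
by rewrite lerD ?spnorm_ub.
Qed.

Lemma spnormN k l (A : 'M[R]_(k,l)) : spnorm (- A) = spnorm A.
Proof.
have h : forall B : 'M[R]_(k,l), spnorm (- B) <= spnorm B.
  move=> B; apply: spnorm_le; first exact: spnorm_ge0.
  by move=> x; rewrite mulNmx vnormN spnorm_ub.
apply/le_anti/andP; split; first exact: h.
by have := h (- A); rewrite opprK.
Qed.

Lemma spnormB k l (A B : 'M[R]_(k,l)) : spnorm (A - B) <= spnorm A + spnorm B.
Proof. by rewrite -(spnormN B); apply: spnormD. Qed.

Lemma spnorm_tr k l (A : 'M[R]_(k,l)) : spnorm A^T <= spnorm A.
Proof.
apply: spnorm_bilin; first exact: spnorm_ge0.
move=> y x; rewrite dot_tr trmxK; apply: le_trans (dot_le _ _) _.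
by rewrite ler_wpM2r ?vnorm_ge0 ?spnorm_ub.
Qed.

Lemma dot_bound k l (A : 'M[R]_(k,l)) y x : dot y (A *m x) <= spnorm A * vnorm y * vnorm x.
Proof.
apply: le_trans (dot_le _ _) _.
by rewrite (mulrC (spnorm A)) -mulrA ler_wpM2l ?vnorm_ge0 ?spnorm_ub.
Qed.

Lemma qf_le k (P : 'M[R]_k) x : qf P x x <= spnorm P * vnorm x ^+ 2.
Proof. by rewrite qfE expr2 mulrA dot_bound. Qed.
Lemma qfD k (A B : 'M[R]_k) x : qf (A + B) x x = qf A x x + qf B x x.
Proof. by rewrite !qfE mulmxDl dotDr. Qed.
Lemma qfB k (A B : 'M[R]_k) x : qf (A - B) x x = qf A x x - qf B x x.
Proof. by rewrite !qfE mulmxBl dotBr. Qed.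
Lemma qf1 k (x : 'cV[R]_k) : qf 1%:M x x = dot x x.
Proof. by rewrite qfE mul1mx. Qed.
Lemma qf_conj k l (B : 'M[R]_(k,l)) (F : 'M[R]_k) x :
  qf (B^T *m F *m B) x x = qf F (B *m x) (B *m x).
Proof. by rewrite !qfE -!mulmxA dot_tr trmxK. Qed.

Lemma pd_unit k (P : 'M[R]_k) : (forall x, x != 0 -> 0 < qf P x x) -> P \in unitmx.
Proof.
move=> h; rewrite unitmxE unitfE; apply/negP => /det0P [v hv hvP].
have hv' : v^T != 0 by rewrite trmx_eq0.
have := h _ hv'; rewrite /qf trmxK hvP mul0mx mxE ltxx //.
Qed.

Lemma mulmx_inv k (M : 'M[R]_k) (y : 'cV[R]_k) : M \in unitmx -> M *m (invmx M *m y) = y.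
Proof. by move=> hM; rewrite mulKVmx. Qed.

Lemma inv_bounds k (M : 'M[R]_k) s : 0 < s -> M^T = M ->
  (forall x, s * dot x x <= qf M x x) ->
  [/\ M \in unitmx,
      forall y : 'cV[R]_k, vnorm (invmx M *m y) <= vnorm y / s &
      forall y : 'cV[R]_k, qf M (invmx M *m y) (invmx M *m y) <= dot y y / s].
Proof.
move=> hs hsym h.
have hu : M \in unitmx.
  apply: pd_unit => x hx; apply: lt_le_trans (h x).
  by rewrite mulr_gt0 // -vnorm_sq exprn_gt0 // vnorm_pos.
have key : forall y : 'cV[R]_k, s * vnorm (invmx M *m y) <= vnorm y.
  move=> y; set w := invmx M *m y.
  have h1 := h w; rewrite qfE mulmx_inv // in h1.
  have h2 := dot_le w y; rewrite -vnorm_sq in h1.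
  have [w0|wpos] := eqVneq (vnorm w) 0; first by rewrite w0 mulr0 vnorm_ge0.
  have wp : 0 < vnorm w by rewrite lt_def wpos vnorm_ge0.
  have : s * vnorm w ^+ 2 <= vnorm w * vnorm y by exact: le_trans h1 h2.
  nra.
split=> // y.
  by rewrite ler_pdivlMr // mulrC key.
set w := invmx M *m y; rewrite qfE mulmx_inv //.
apply: le_trans (dot_le w y) _; rewrite -vnorm_sq ler_pdivlMr //.
have := key y; have := vnorm_ge0 y; rewrite -/w; nra.
Qed.

Lemma sigma_ge0 k (A : 'M[R]_k) : 0 <= sigma_min A.
Proof.
rewrite /sigma_min; set S := [set vnorm (A *m x) | x in @usphere R k].
have [/set0P hS| /negPn/eqP hS0] := boolP (S != set0).
  by apply: lb_le_inf => // e [x _ <-]; exact: vnorm_ge0.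
by rewrite hS0 inf0.
Qed.

Lemma sigma_lb k (A : 'M[R]_k) z : sigma_min A * vnorm z <= vnorm (A *m z).
Proof.
have [->|hz] := eqVneq z 0; first by rewrite mulmx0 !vnorm0 mulr0.
have hp := vnorm_pos hz.
have hv : 0 <= (vnorm z)^-1 by rewrite invr_ge0 ltW.
set y := (vnorm z)^-1 *: z.
have hy : vnorm y = 1 by rewrite vnormZ (ger0_norm hv) mulVf // gt_eqF.
have hlb : has_lbound [set vnorm (A *m x) | x in @usphere R k].
  by exists 0 => e [x _ <-]; exact: vnorm_ge0.
have h := ge_inf hlb (ex_intro2 _ _ y hy erefl).
move: h; rewrite -scalemxAr vnormZ (ger0_norm hv) -/(sigma_min A) => h.
have := ler_wpM2l (ltW hp) h.
by rewrite mulrA mulfV ?gt_eqF // mul1r mulrC.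
Qed.

Lemma sigma_ge1 k (Rw : 'M[R]_k) : (0 < k)%N -> loewner_ge Rw 1%:M -> 1 <= sigma_min Rw.
Proof.
move=> hk [_ hl]; rewrite /sigma_min.
apply: lb_le_inf.
  pose e : 'cV[R]_k := delta_mx (Ordinal hk) 0.
  have he : vnorm e = 1.
    apply: eq_sq; rewrite ?vnorm_ge0 // vnorm_sq dotE expr1n.
    rewrite (bigD1 (Ordinal hk)) //= big1 => [|i hi]; first by rewrite !mxE eqxx mulr1 addr0.
    by rewrite !mxE (negbTE hi) mul0r.
  by exists (vnorm (Rw *m e)), e.
move=> e [z hz <-].
have h := hl z; rewrite -/(qf _ z z) qfB qf1 subr_ge0 in h.
have h2 := dot_le z (Rw *m z); rewrite -qfE in h2.
have := le_trans h h2; rewrite -vnorm_sq hz expr1n mul1r //.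
Qed.
Lemma qf0 k (P : 'M[R]_k) : qf P 0 0 = 0.
Proof. by rewrite qfE mulmx0 dotE big1 // => i _; rewrite mxE mul0r. Qed.

Lemma le_of_sq (a b : R) : 0 <= b -> a ^+ 2 <= b ^+ 2 -> a <= b.
Proof.
move=> hb h; apply: le_trans (ler_norm a) _.
by rewrite -ler_sqr ?nnegrE // real_normK // num_real.
Qed.

Lemma pd_nonneg k (P : 'M[R]_k) : pd P -> forall x, 0 <= qf P x x.
Proof.
move=> [_ h] x; have [->|hx] := eqVneq x 0; first by rewrite qf0.
exact: ltW (h x hx).
Qed.

Lemma qf_sigma k (Rw : 'M[R]_k) : pd Rw -> forall x, sigma_min Rw * dot x x <= qf Rw x x.
Proof.
move=> hpd x; have [hsym hpos] := hpd.
have hnn := pd_nonneg hpd.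
have hu : Rw \in unitmx by apply: pd_unit.
set s := sigma_min Rw.
have hs0 : 0 <= s by apply: sigma_ge0.
have [->|hx] := eqVneq x 0; first by rewrite qf0 -vnorm_sq vnorm0 expr0n mulr0.
set w := invmx Rw *m x.
have h1 : s * vnorm w <= vnorm x by have := sigma_lb Rw w; rewrite mulmx_inv.
have h2 := qf_CS x w hsym hnn.
have e1 : qf Rw x w = dot x x by rewrite qfE mulmx_inv.
have e2 : qf Rw w w = dot w x by rewrite qfE mulmx_inv.
have h3 := dot_le w x.
rewrite e1 e2 in h2; rewrite -!vnorm_sq in h2 *.
have hq := hnn x.
have hw := vnorm_ge0 w.
have hxp := vnorm_pos hx.
set q := qf Rw x x in h2 hq *.
set a := vnorm x in h1 h2 h3 hxp *.
set b := vnorm w in h1 h3 hw *.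
set t := dot w x in h2 h3.
have hd : 0 < a ^+ 2 by rewrite exprn_gt0.
set d := a ^+ 2 in h2 hd *.
have h5 : s * t <= d.
  have : s * t <= s * (b * a) by rewrite ler_wpM2l.
  move=> h6; apply: le_trans h6 _; rewrite /d expr2 mulrA ler_wpM2r //; exact: ltW.
have h6 : s * d ^+ 2 <= q * d.
  apply: le_trans (_ : s * (q * t) <= _); first by rewrite ler_wpM2l.
  by rewrite mulrCA ler_wpM2l.
rewrite expr2 mulrA in h6.
by rewrite -(ler_pM2r hd).
Qed.

Section Gain.
Variables (k l : nat) (Rw : 'M[R]_l) (B : 'M[R]_(k,l)) (F : 'M[R]_k).
Hypothesis hR : pd Rw.
Hypothesis hF : psd F.
Hypothesis hs : 0 < sigma_min Rw.
Let s := sigma_min Rw.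
Let M := Rw + B^T *m F *m B.

Lemma M_sym : M^T = M.
Proof.
by rewrite /M linearD /= !trmx_mul trmxK hR.1 hF.1 mulmxA.
Qed.

Lemma M_lb x : s * dot x x <= qf M x x.
Proof.
rewrite /M qfD qf_conj; apply: le_trans (qf_sigma hR x) _.
by rewrite lerDl; apply: hF.2.
Qed.

Lemma M_unit : M \in unitmx.
Proof. by have [] := inv_bounds hs M_sym M_lb. Qed.

Lemma M_inv_norm : spnorm (invmx M) <= s^-1.
Proof.
apply: spnorm_le; first by rewrite invr_ge0 ltW.
move=> y; have [_ h _] := inv_bounds hs M_sym M_lb.
by rewrite mulrC; apply: h.
Qed.

Lemma G_norm : spnorm (invmx M *m B^T *m F) <= Num.sqrt (spnorm F / s).
Proof.
have hf0 : 0 <= spnorm F / s by rewrite divr_ge0 ?spnorm_ge0 ?ltW.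
apply: spnorm_bilin; first exact: sqrtr_ge0.
move=> y z.
have [_ _ h3] := inv_bounds hs M_sym M_lb.
set w := invmx M *m y.
have e : dot y (invmx M *m B^T *m F *m z) = qf F (B *m w) z.
  rewrite -!mulmxA dot_tr dot_tr trmxK qfE.
  by rewrite trmx_inv M_sym.
rewrite e; apply: le_of_sq.
  by rewrite mulr_ge0 ?mulr_ge0 ?sqrtr_ge0 ?vnorm_ge0.
apply: le_trans (qf_CS _ _ hF.1 hF.2) _.
have hA : qf F (B *m w) (B *m w) <= dot y y / s.
  apply: le_trans (h3 y); rewrite -/w /M qfD qf_conj lerDr.
  exact: pd_nonneg hR w.
have hB := qf_le F z.
have hA0 : 0 <= qf F (B *m w) (B *m w) by apply: hF.2.
have hB0 : 0 <= qf F z z by apply: hF.2.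
rewrite !exprMn sqr_sqrtr // -!vnorm_sq in hA *.
have hs' : 0 < s by [].
set a := qf F (B *m w) (B *m w) in hA hA0 *.
set b := qf F z z in hB hB0 *.
have -> : spnorm F / s * vnorm y ^+ 2 * vnorm z ^+ 2 =
   (vnorm y ^+ 2 / s) * (spnorm F * vnorm z ^+ 2) by rewrite /s; ring.
exact: ler_pM.
Qed.

Lemma M_K (A : 'M[R]_k) : M *m (invmx M *m B^T *m F *m A) = B^T *m F *m A.
Proof. by rewrite -!mulmxA mulKVmx ?M_unit // !mulmxA. Qed.

Lemma L_quad (A : 'M[R]_k) x :
  qf F ((A - B *m (invmx M *m B^T *m F *m A)) *m x)
       ((A - B *m (invmx M *m B^T *m F *m A)) *m x) <= qf F (A *m x) (A *m x).
Proof.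
set K := invmx M *m B^T *m F *m A.
set a := A *m x; set kx := K *m x.
have eL : (A - B *m K) *m x = a - B *m kx by rewrite mulmxBl -mulmxA.
have eM : M *m kx = B^T *m (F *m a).
  by rewrite /kx /K (mulmxA M) M_K -!mulmxA.
have e1 : dot (B *m kx) (F *m a) = qf M kx kx.
  by rewrite qfE eM (dot_tr B^T) trmxK.
have e2 : dot a (F *m (B *m kx)) = qf M kx kx.
  by rewrite -qfE qf_sym ?hF.1 // qfE e1.
have e3 : dot (B *m kx) (F *m (B *m kx)) = qf M kx kx - qf Rw kx kx.
  rewrite -qfE -qf_conj /M qfD; lra.
rewrite eL qfE mulmxBr !dotBl !dotBr e1 e2 e3 -qfE.
have h1 : 0 <= qf M kx kx.
  apply: le_trans (M_lb kx); rewrite mulr_ge0 ?dot_ge0 //; exact: ltW.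
have h2 := pd_nonneg hR kx.
lra.
Qed.
End Gain.
Lemma qf_inv_nonneg l (Rw : 'M[R]_l) : pd Rw -> forall z, 0 <= qf (invmx Rw) z z.
Proof.
move=> hR z; have hu : Rw \in unitmx by apply: pd_unit; exact: hR.2.
set w := invmx Rw *m z.
have -> : z = Rw *m w by rewrite mulmx_inv.
rewrite qfE mulKmx // dotC -qfE; exact: pd_nonneg.
Qed.

Lemma dare_ge n m (Q : 'M[R]_n) (Rw : 'M[R]_m) (A : 'M[R]_n) (B : 'M[R]_(n,m))
  (P : 'M[R]_n) : pd Rw -> pd P -> P = riccati Q Rw A B P -> loewner_ge Q 1%:M ->
  forall x, dot x x <= qf P x x.
Proof.
move=> hR hP hric [_ hQ] x.
set S := S_B B Rw.
have Ssym : S^T = S by rewrite /S /S_B !trmx_mul trmxK trmx_inv hR.1 mulmxA.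
have Snn : forall y, 0 <= qf S y y.
  move=> y; rewrite /S /S_B -{1}(trmxK B) qf_conj; exact: qf_inv_nonneg.
set G := 1%:M + S *m P.
have hG : G \in unitmx.
  rewrite unitmxE unitfE; apply/negP => /det0P [v hv hvG].
  set y := v^T.
  have hy : y + P *m (S *m y) = 0.
    have := congr1 trmx hvG; rewrite trmx_mul trmx0 /G linearD /= trmx1 trmx_mul.
    by rewrite Ssym hP.1 mulmxDl mul1mx -mulmxA.
  have e : dot (S *m y) y + qf P (S *m y) (S *m y) = 0.
    by rewrite qfE -dotDr hy dotC dotE big1 // => i _; rewrite mxE mul0r.
  have h1 : 0 <= dot (S *m y) y by rewrite dotC -qfE; exact: Snn.
  have h2 := pd_nonneg hP (S *m y).
  have h3 : qf P (S *m y) (S *m y) = 0 by lra.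
  have hSy : S *m y = 0.
    apply/eqP/negPn/negP => hne; have := hP.2 _ hne; rewrite -/(qf P (S *m y) (S *m y)) h3 ltxx //.
  move: hy; rewrite hSy mulmx0 addr0 => y0.
  by move: hv; rewrite -trmx_eq0 -/y y0 eqxx.
have hPG : forall v, 0 <= qf (P *m invmx G) v v.
  move=> v; set y := invmx G *m v.
  have ev : v = y + S *m (P *m y).
    have -> : y + S *m (P *m y) = G *m y by rewrite /G mulmxDl mul1mx mulmxA.
    by rewrite /y mulKVmx.
  rewrite qfE -mulmxA -/y {1}ev dotDl (dotC (S *m _)) -!qfE.
  by rewrite addr_ge0 ?Snn // (pd_nonneg hP).
have := hQ x; rewrite -/(qf _ x x) qfB qf1 subr_ge0 => hq.
rewrite hric /riccati -/S -/G qfD -(mulmxA A^T P) qf_conj.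
by apply: le_trans hq _; rewrite lerDr.
Qed.
Lemma ident_ab p q (a1 a2 a3 a4 a5 a6 a7 a8 : 'M[R]_(p,q)) :
  a1 - ((a2 - a4) + a3) = (a1 - a5) - (a3 - a6) + ((a5 - a6) - (a7 - a8)) + ((a7 - a8) - (a2 - a4)).
Proof. apply/matrixP=> i j; rewrite !mxE; ring. Qed.

Lemma gain_decomp n m (Rw : 'M[R]_m) (Ah As : 'M[R]_n) (Bh Bs : 'M[R]_(n,m)) (F P : 'M[R]_n) :
  (Rw + Bh^T *m F *m Bh) \in unitmx -> (Rw + Bs^T *m P *m Bs) \in unitmx ->
  gainK Rw Ah Bh F - gainK Rw As Bs P =
  invmx (Rw + Bh^T *m F *m Bh) *m
   (Bh^T *m F *m (Ah - As) - Bh^T *m F *m (Bh - Bs) *m gainK Rw As Bs P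
    + (Bh - Bs)^T *m F *m (As - Bs *m gainK Rw As Bs P)
    + Bs^T *m (F - P) *m (As - Bs *m gainK Rw As Bs P)).
Proof.
move=> hM hMs.
set M := Rw + Bh^T *m F *m Bh.
set Ks := gainK Rw As Bs P.
have hK : (Rw + Bs^T *m P *m Bs) *m Ks = Bs^T *m P *m As.
  by rewrite /Ks /gainK !mulmxA mulmxV // mul1mx.
have hKh : M *m gainK Rw Ah Bh F = Bh^T *m F *m Ah.
  by rewrite /gainK !mulmxA mulmxV // mul1mx.
have hRK : Rw *m Ks = Bs^T *m P *m As - Bs^T *m P *m Bs *m Ks.
  by rewrite -hK mulmxDl addrK.
rewrite -[LHS](mulKmx hM); congr (_ *m _).
rewrite mulmxBr hKh /M mulmxDl hRK.

clearbody Ks.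
rewrite !mulmxBr.
rewrite ?mulmxBl.
rewrite [(Bh - Bs)^T]linearB /=.
rewrite ?mulmxBl.
rewrite ?mulmxBr.
rewrite !mulmxA.
apply/matrixP => i j; rewrite !mxE; ring.
Qed.
Lemma pm3 (a b c a' b' c' : R) : 0 <= a -> 0 <= b -> 0 <= c ->
  a <= a' -> b <= b' -> c <= c' -> a * b * c <= a' * b' * c'.
Proof.
move=> ha hb hc h1 h2 h3; apply: ler_pM => //; first exact: mulr_ge0.
exact: ler_pM.
Qed.

Lemma poly_ineq (u em e p r t : R) : 1 <= u -> 0 <= em -> em <= u -> 0 <= e -> e <= u ->
  0 <= p -> p <= u -> 0 <= r -> 0 <= t -> r ^+ 2 = p + e -> t ^+ 2 = p ->
  (u + em) * (p + e) * em + r * t * u * em + em * (p + e) * (t * u) + u * e * (t * u)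
  <= u ^+ 2 * (t + 1) * (3 * em + 4 * e).
Proof.
move=> hu hem0 hemu he0 heu hp0 hpu hr ht hr2 ht2.
have u0 : 0 <= u by lra.
have a1 : u * p * em <= u * u * em by apply: pm3.
have a2 : u * e * em <= u * e * u by apply: pm3.
have a3 : em * em * p <= em * u * u by apply: pm3.
have a4 : em * em * e <= u * u * e by apply: pm3.
have rt : r * t <= p + e / 2.
  have : 0 <= (r - t) ^+ 2 by rewrite sqr_ge0.
  rewrite sqrrB hr2 ht2; lra.
have a5 : r * t * (u * em) <= (p + e / 2) * (u * em) by rewrite ler_wpM2r ?mulr_ge0.
have a6 : u * p * em <= u * u * em by apply: pm3.
have a7 : u * e * em <= u * u * e by rewrite -mulrA (mulrC e) mulrA; apply: pm3.
have a8 : em * p * (t * u) <= u * u * (t * u) by apply: pm3; rewrite ?mulr_ge0.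
have a9 : em * e * (t * u) <= u * e * (t * u) by apply: pm3; rewrite ?mulr_ge0.
have a10 : em * p * (t * u) <= em * u * (t * u) by apply: pm3; rewrite ?mulr_ge0.
have b1 : 0 <= u * u * t * em by rewrite !mulr_ge0.
have b2 : 0 <= u * u * t * e by rewrite !mulr_ge0.
have b3 : 0 <= u * u * e by rewrite !mulr_ge0.
have b4 : 0 <= u * u * em by rewrite !mulr_ge0.
rewrite !expr2; lra.
Qed.
Lemma final_ineq (u em e p s : R) : 0 < s -> 1 <= u -> 0 <= em -> em <= u -> 0 <= e -> e <= u ->
  0 <= p -> p <= u ->
  s^-1 * ((u + em) * (p + e) * em) + Num.sqrt ((p + e) / s) * em * (Num.sqrt (p / s) * u)
  + s^-1 * (em * (p + e) * (Num.sqrt p * u)) + s^-1 * (u * e * (Num.sqrt p * u))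
  <= u ^+ 2 * (Num.sqrt p + 1) * (3 * em + 4 * e) / s.
Proof.
move=> hs hu hem0 hemu he0 heu hp0 hpu.
have hpe : 0 <= p + e by rewrite addr_ge0.
rewrite (sqrtrM _ hpe) (sqrtrM _ hp0).
have hsi : 0 <= s^-1 by rewrite invr_ge0 ltW.
have w2 : Num.sqrt s^-1 ^+ 2 = s^-1 by rewrite sqr_sqrtr.
have hX := poly_ineq hu hem0 hemu he0 heu hp0 hpu (sqrtr_ge0 (p + e)) (sqrtr_ge0 p)
  (sqr_sqrtr hpe) (sqr_sqrtr hp0).
set w := Num.sqrt s^-1 in w2 *.
set r := Num.sqrt (p + e) in hX *.
set t := Num.sqrt p in hX *.
have h := ler_wpM2l hsi hX.
rewrite -w2 in h *.
lra.
Qed.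

Lemma spnorm_mul3 k l o q (A : 'M[R]_(k,l)) (B : 'M[R]_(l,o)) (C : 'M[R]_(o,q)) a b c :
  spnorm A <= a -> spnorm B <= b -> spnorm C <= c -> spnorm (A *m B *m C) <= a * b * c.
Proof.
move=> ha hb hc; apply: le_trans (spnorm_mul _ _) _.
apply: ler_pM; rewrite ?spnorm_ge0 //.
apply: le_trans (spnorm_mul _ _) _; apply: ler_pM; rewrite ?spnorm_ge0 //.
Qed.

Lemma vnorm_cV0 (y : 'cV[R]_0) : vnorm y = 0.
Proof. by apply: eq_sq; rewrite ?vnorm_ge0 // vnorm_sq dotE big_ord0 expr0n. Qed.
End Aux.

Unset Implicit Arguments.
Local Close Scope classical_set_scope.

Theorem lemma6 (R : realType) (n m : nat)
    (Q : 'M[R]_n) (Rw : 'M[R]_m)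
    (Astar : 'M[R]_n) (Bstar : 'M[R]_(n, m)) (Pstar : 'M[R]_n)
    (Ahat : 'M[R]_n) (Bhat : 'M[R]_(n, m)) (F : 'M[R]_n)
    (eps_m eps Ups : R) :
  (* weights *)
  psd Q -> pd Rw ->
  (* P_star is the unique positive definite solution of the DARE *)
  pd Pstar -> Pstar = riccati Q Rw Astar Bstar Pstar ->
  (forall P : 'M[R]_n, pd P -> P = riccati Q Rw Astar Bstar P -> P = Pstar) ->
  (* model error *)
  Num.max (spnorm (Ahat - Astar)) (spnorm (Bhat - Bstar)) <= eps_m ->
  psd F -> spnorm (F - Pstar) <= eps ->
  (m <= n)%N ->
  loewner_ge Rw 1%:M -> loewner_ge Q 1%:M ->
  stabilizable Astar Bstar ->
  spnorm Astar <= Ups -> spnorm Bstar <= Ups -> spnorm Pstar <= Ups ->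
  Num.max 1 eps_m <= Ups -> eps <= Ups ->
  spnorm (gainK Rw Ahat Bhat F - gainK Rw Astar Bstar Pstar)
    <= Ups ^+ 2 * (Num.sqrt (spnorm Pstar) + 1) * (3 * eps_m + 4 * eps)
       / sigma_min Rw.
Proof.
move=> hQ hR hP hric huniq hmax hF hFP hmn hRI hQI hstab hA hB hPu hU heps.
have [hdA hdB] : spnorm (Ahat - Astar) <= eps_m /\ spnorm (Bhat - Bstar) <= eps_m.
  by move: hmax; rewrite ge_max => /andP[].
have [hU1 hUem] : 1 <= Ups /\ eps_m <= Ups by move: hU; rewrite ge_max => /andP[].
have hU0 : 0 <= Ups by lra.
have hem0 : 0 <= eps_m := le_trans (spnorm_ge0 _) hdA.
have he0 : 0 <= eps := le_trans (spnorm_ge0 _) hFP.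
have hp0 : 0 <= spnorm Pstar := spnorm_ge0 _.
have hs0 := sigma_ge0 Rw.
have hrhs0 : 0 <= Ups ^+ 2 * (Num.sqrt (spnorm Pstar) + 1) * (3 * eps_m + 4 * eps)
       / sigma_min Rw.
  rewrite divr_ge0 // !mulr_ge0 ?sqr_ge0 ?addr_ge0 ?sqrtr_ge0 ?mulr_ge0 //; lra.
have [m0|mpos] := posnP m.
  subst m; apply: le_trans hrhs0; apply: spnorm_le => // x.
  by rewrite vnorm_cV0 mul0r.
have hs1 := sigma_ge1 mpos hRI.
have hs : 0 < sigma_min Rw by apply: lt_le_trans hs1; exact: ltr01.
have hPpsd : psd Pstar := conj hP.1 (pd_nonneg hP).
have hMu := M_unit Bhat hR hF hs.
have hMsu := M_unit Bstar hR hPpsd hs.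
rewrite (gain_decomp Ahat Astar hMu hMsu).
have hF1 : spnorm F <= spnorm Pstar + eps.
  have := spnormD Pstar (F - Pstar); rewrite addrC subrK => h.
  by apply: le_trans h _; rewrite lerD2l.
have hBh : spnorm Bhat^T <= Ups + eps_m.
  apply: le_trans (spnorm_tr _) _.
  have := spnormD Bstar (Bhat - Bstar); rewrite addrC subrK => h.
  by apply: le_trans h _; rewrite lerD.
have hMi := M_inv_norm Bhat hR hF hs.
have hG := G_norm Bhat hR hF hs.
have hG' : spnorm (invmx (Rw + Bhat^T *m F *m Bhat) *m Bhat^T *m F)
    <= Num.sqrt ((spnorm Pstar + eps) / sigma_min Rw).
  apply: le_trans hG _; rewrite ler_sqrt ?divr_ge0 ?addr_ge0 //.
  by rewrite ler_pM2r ?invr_gt0.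
have hKs : spnorm (gainK Rw Astar Bstar Pstar) <= Num.sqrt (spnorm Pstar / sigma_min Rw) * Ups.
  apply: le_trans (spnorm_mul _ _) _.
  have hGs := G_norm Bstar hR hPpsd hs.
  by apply: ler_pM; rewrite ?spnorm_ge0.
have hLs : spnorm (Astar - Bstar *m gainK Rw Astar Bstar Pstar) <= Num.sqrt (spnorm Pstar) * Ups.
  apply: spnorm_le; first by rewrite mulr_ge0 ?sqrtr_ge0.
  move=> x; apply: le_sq; rewrite ?mulr_ge0 ?sqrtr_ge0 ?vnorm_ge0 //.
  rewrite vnorm_sq; apply: le_trans (dare_ge hR hP hric hQI _) _.
  apply: le_trans (L_quad Bstar hR hPpsd hs Astar x) _.
  apply: le_trans (qf_le _ _) _.
  have -> : (Num.sqrt (spnorm Pstar) * Ups * vnorm x) ^+ 2 =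
      spnorm Pstar * (Ups * vnorm x) ^+ 2.
    by rewrite -mulrA exprMn (sqr_sqrtr hp0).
  rewrite ler_wpM2l // ler_sqr ?nnegrE ?mulr_ge0 ?vnorm_ge0 //.
  apply: le_trans (spnorm_ub _ _) _; rewrite ler_wpM2r ?vnorm_ge0 //.
set Mi := invmx (Rw + Bhat^T *m F *m Bhat) in hMi hG' *.
set Ks := gainK Rw Astar Bstar Pstar in hKs hLs *.
set Ls := Astar - Bstar *m Ks in hLs *.
set s := sigma_min Rw in hs hs1 hs0 hMi hG' hKs hrhs0 *.
set p := spnorm Pstar in hp0 hPu hF1 hG' hKs hLs hrhs0 *.
clearbody Ls Ks Mi.
have t1 : spnorm (Mi *m (Bhat^T *m F *m (Ahat - Astar))) <=
    s^-1 * ((Ups + eps_m) * (p + eps) * eps_m).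
  apply: le_trans (spnorm_mul _ _) _; apply: ler_pM; rewrite ?spnorm_ge0 //.
  exact: spnorm_mul3.
have t2 : spnorm (Mi *m (Bhat^T *m F *m (Bhat - Bstar) *m Ks)) <=
    Num.sqrt ((p + eps) / s) * eps_m * (Num.sqrt (p / s) * Ups).
  rewrite !mulmxA; exact: spnorm_mul3.
have t3 : spnorm (Mi *m ((Bhat - Bstar)^T *m F *m Ls)) <=
    s^-1 * (eps_m * (p + eps) * (Num.sqrt p * Ups)).
  apply: le_trans (spnorm_mul _ _) _; apply: ler_pM; rewrite ?spnorm_ge0 //.
  apply: spnorm_mul3 => //; exact: le_trans (spnorm_tr _) hdB.
have t4 : spnorm (Mi *m (Bstar^T *m (F - Pstar) *m Ls)) <=
    s^-1 * (Ups * eps * (Num.sqrt p * Ups)).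
  apply: le_trans (spnorm_mul _ _) _; apply: ler_pM; rewrite ?spnorm_ge0 //.
  apply: spnorm_mul3 => //; exact: le_trans (spnorm_tr _) hB.
set T1 := Bhat^T *m F *m (Ahat - Astar) in t1 *.
set T2 := Bhat^T *m F *m (Bhat - Bstar) *m Ks in t2 *.
set T3 := (Bhat - Bstar)^T *m F *m Ls in t3 *.
set T4 := Bstar^T *m (F - Pstar) *m Ls in t4 *.
clearbody T1 T2 T3 T4.
rewrite !mulmxDr mulmxN.
apply: le_trans (spnormD _ _) _.
apply: le_trans _ (final_ineq hs hU1 hem0 hUem he0 heps hp0 hPu).
apply: lerD => //; apply: le_trans (spnormD _ _) _; apply: lerD => //.
apply: le_trans (spnormD _ _) _; rewrite spnormN; exact: lerD.
Qed.
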